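(* Let $\mathcal G=(E,\mathcal I)$ be a matroid, $c:E\to\mathbb R_{\ge0}$, $U\subseteq E$, $q\in\mathbb N$, and let $B$ be a minimum basis of $[\mathcal G\cap U]_{\le q}$ with respect to $c$. Let $\Delta\in\mathcal I$ with $|\Delta|\le q$, and let $a\in(\Delta\cap U)\setminus B$. Then there is $b\in B\setminus\Delta$ such that $\Delta-a+b\in\mathcal I$ and $c(b)\le c(a)$.
   Context: For a matroid $\mathcal G=(E,\mathcal I)$, $U\subseteq E$ and $q\in\mathbb N$, $[\mathcal G\cap U]_{\le q}$ denotes the matroid with ground set $U$ and independent sets $\{A\in\mathcal I: A\subseteq U,\ |A|\le q\}$. A basis is a maximal independent set; a minimum basis w.r.t. $c$ is a basis $B$ with $\sum_{e\in B}c(e)\le\sum_{e\in B'}c(e)$ for every basis $B'$. $A+e=A\cup\{e\}$, $A-e=A\setminus\{e\}$. *)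

(* Defs.v *)
From mathcomp Require Import all_boot all_order all_algebra.
Set Implicit Arguments. Unset Strict Implicit. Unset Printing Implicit Defensive.
Import Order.TTheory GRing.Theory Num.Theory.

Definition is_matroid (E : finType) (I : {set E} -> bool) : Prop :=
  [/\ I set0,
      (forall A B : {set E}, B \subset A -> I A -> I B) &
      (forall A B : {set E}, I A -> I B -> #|A| < #|B| ->
         exists2 x, x \in B :\: A & I (x |: A))].

Definition trunc_restr (E : finType) (I : {set E} -> bool) (U : {set E}) (q : nat)
  (A : {set E}) : bool := [&& I A, A \subset U & #|A| <= q].

Definition is_basis (E : finType) (J : {set E} -> bool) (U : {set E}) (B : {set E}) : Prop :=
  J B /\ B \subset U /\ (forall B' : {set E}, B' \subset U -> J B' -> B \subset B' -> B' = B).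

Definition cost (E : finType) (R : numDomainType) (c : E -> R) (A : {set E}) : R :=
  (\sum_(e in A) c e)%R.

Definition is_min_basis (E : finType) (R : numDomainType) (J : {set E} -> bool)
  (U : {set E}) (c : E -> R) (B : {set E}) : Prop :=
  is_basis J U B /\
  (forall B', is_basis J U B' -> (cost c B <= cost c B')%R).

(* Main.v *)
Require Import Defs.
From mathcomp Require Import all_boot all_order all_algebra.
From mathcomp Require Import zify.
Import Order.TTheory GRing.Theory Num.Theory.

Set Implicit Arguments.
Section Aux.
Variable E : finType.
Definition augP (K : {set E} -> bool) := forall A B : {set E}, K A -> K B -> #|A| < #|B| ->
         exists2 x, x \in B :\: A & K (x |: A).

Lemma ext_lem (K : {set E} -> bool) : augP K -> forall n (X Y : {set E}),
  #|Y| - #|X| = n -> K X -> K Y ->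
  exists Z, [/\ K Z, X \subset Z, Z \subset X :|: Y & #|Z| = maxn #|X| #|Y|].
Proof.
move=> Ha; elim=> [|n IH] X Y Hn KX KY.
  exists X; split=> //; first exact: subsetUl.
  apply/esym/maxn_idPl; lia.
have [x Hx Kx] := Ha X Y KX KY ltac:(lia).
move/setDP: Hx => [xY xX].
have Hc : #|x |: X| = #|X|.+1 by rewrite cardsU1 xX.
have [Z [KZ sXZ sZ cZ]] := IH (x |: X) Y ltac:(lia) Kx KY.
exists Z; split=> //.
- exact: subset_trans (subsetUr _ _) sXZ.
- apply: (subset_trans sZ); apply/subsetP=> y; rewrite !inE.
  by case/orP=> [/orP[/eqP->|->]|->]; rewrite ?xY ?orbT.
- rewrite cZ Hc; lia.
Qed.
End Aux.
Theorem mainTheorem11 (R : realFieldType) (E : finType) (I : {set E} -> bool)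
  (c : E -> R) (U : {set E}) (q : nat) (B Delta : {set E}) (a : E) :
  is_matroid I ->
  (forall e, (0 <= c e)%R) ->
  is_min_basis (trunc_restr I U q) U c B ->
  I Delta -> #|Delta| <= q ->
  a \in (Delta :&: U) :\: B ->
  exists2 b, b \in B :\: Delta &
    I (b |: (Delta :\ a)) /\ (c b <= c a)%R.
Proof.
move=> [I0 Ih Ia] _ [[JB [sBU Bmax]] Bmin] IDelta cDelta.
rewrite !inE => /andP[aB /andP[aD aU]].
set J := trunc_restr I U q.
have Jh : forall A B' : {set E}, B' \subset A -> J A -> J B'.
  move=> A B' s /and3P[IA sA cA]; apply/and3P; split.
  - exact: Ih IA.
  - exact: subset_trans s sA.
  - exact: leq_trans (subset_leq_card s) cA.
have Ja : augP J.
  move=> A B' /and3P[IA sA cA] /and3P[IB sB cB] lt.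
  have [x Hx Ix] := Ia A B' IA IB lt.
  exists x => //; apply/and3P; split=> //.
  - move/setDP: Hx => [xB _]; rewrite subUset sA andbT sub1set.
    exact: (subsetP sB).
  - move/setDP: Hx => [_ xA]; rewrite cardsU1 xA; exact: leq_trans lt cB.
have basis_card : forall X, J X -> #|B| <= #|X| -> is_basis J U X.
  move=> X JX cX; split=> //; split; first by case/and3P: JX.
  move=> B' sB' JB' sXB'; apply/eqP; rewrite eq_sym eqEcard sXB' /=.
  rewrite leqNgt; apply/negP=> lt.
  have [x /setDP[xB' xB] Jx] := Ja B B' JB JB' (leq_ltn_trans cX lt).
  have : x |: B = B.
    apply: Bmax => //; last exact: subsetUr.
    by case/and3P: Jx.
  by move/setP/(_ x); rewrite !inE eqxx (negbTE xB).
have nJaB : ~~ J (a |: B).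
  apply/negP=> Jab.
  have : a |: B = B.
    apply: Bmax => //; last exact: subsetUr.
    by case/and3P: Jab.
  by move/setP/(_ a); rewrite !inE eqxx (negbTE aB).
set P := fun C : {set E} => (C \subset a |: B) && ~~ J C.
have P0 : P (a |: B) by rewrite /P subxx nJaB.
case: (@arg_minnP {set E} (a |: B) P (fun C : {set E} => #|C|) P0) => C /andP[sC nJC] Cmin.
have JCb : forall b, b \in C -> J (C :\ b).
  move=> b bC; apply/negPn/negP => nJ.
  have := Cmin (C :\ b); rewrite /P nJ andbT.
  have -> : C :\ b \subset a |: B by exact: subset_trans (subsetDl _ _) sC.
  by move=> /(_ isT); rewrite (cardsD1 b C) bC ltnn.
have aC : a \in C.
  apply/negPn/negP=> naC; move/negP: nJC; apply; apply: (Jh B) => //.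
  apply/subsetP=> x xC; have := subsetP sC x xC; rewrite !inE.
  by case/orP=> // /eqP ex; rewrite -ex xC in naC.
have sCaB : C :\ a \subset B.
  apply/subsetP=> x; rewrite !inE => /andP[xa xC].
  by have := subsetP sC x xC; rewrite !inE (negbTE xa).
have stepA : forall b, b \in C -> b != a -> (c b <= c a)%R.
  move=> b bC ba.
  have [Z [JZ sZ1 sZ2 cZ]] := @ext_lem _ J Ja (#|B| - #|C :\ b|) (C :\ b) B (erefl _) (JCb b bC) JB.
  have cCb : #|C :\ b| <= #|B|.
    have h0 := subset_leq_card sCaB; have h1 := cardsD1 a C; have h2 := cardsD1 b C.
    rewrite aC bC in h1 h2; clear -h0 h1 h2; lia.
  have bZ : b \notin Z.
    apply/negP=> bZ; move/negP: nJC; apply; apply: (Jh Z) => //.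
    apply/subsetP=> x xC; case: (eqVneq x b) => [->//|xb].
    by apply: (subsetP sZ1); rewrite !inE xb.
  have bB : b \in B by apply: (subsetP sCaB); rewrite !inE ba.
  have ZE : Z = a |: (B :\ b).
    apply/eqP; rewrite eqEcard; apply/andP; split.
    - apply/subsetP=> x xZ; have := subsetP sZ2 x xZ; rewrite !inE.
      have xb : x != b by apply: contraNneq bZ => <-.
      rewrite xb /=; case/orP=> [xC|->]; last by rewrite orbT.
      by have := subsetP sC x xC; rewrite !inE.
    - rewrite cZ cardsU1 !inE (negbTE aB) andbF /=.
      rewrite (cardsD1 b B) bB; clear -cCb; lia.
  have bZ' : is_basis J U Z by apply: basis_card => //; rewrite cZ leq_maxr.
  have := Bmin Z bZ'; rewrite ZE /cost big_setU1 /=; last first.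
    by rewrite !inE (negbTE aB) andbF.
  by rewrite (big_setD1 b bB) /= lerD2r.
have ID : I (Delta :\ a) by apply: Ih IDelta; exact: subsetDl.
have [b Hb]: exists b, [&& b \in C, b != a, b \notin Delta & I (b |: (Delta :\ a))].
  case: (boolP [exists b, [&& b \in C, b != a, b \notin Delta & I (b |: (Delta :\ a))]]).
    by move/existsP.
  move/existsPn=> H; exfalso.
  have hW : forall Z : {set E}, Z \subset (Delta :\ a) :|: (C :\ a) -> I Z -> #|Z| <= #|Delta :\ a|.
    move=> Z sZ IZ; rewrite leqNgt; apply/negP=> lt.
    have [x /setDP[xZ xD] Ix] := Ia _ _ ID IZ lt.
    have := subsetP sZ x xZ; rewrite in_setU (negbTE xD) /= => xCa.
    move: xCa; rewrite !inE => /andP[xa xC].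
    have := H x; rewrite xC xa Ix /= andbT.
    by move: xD; rewrite !inE xa /= => ->.
  have ICa : I (C :\ a) by case/and3P: (JCb a aC).
  have [X [IX s1 s2 cX]] := @ext_lem _ I Ia _ (C :\ a) Delta (erefl _) ICa IDelta.
  have hD := cardsD1 a Delta; rewrite aD in hD.
  case: (boolP (a \in X)) => aX.
  - case: (leqP #|Delta| #|C :\ a|) => hc.
      have := hW (C :\ a) (subsetUr _ _) ICa; clear -hc hD; lia.
    have sCX : C \subset X.
      apply/subsetP=> x xC; case: (eqVneq x a) => [->//|xa].
      by apply: (subsetP s1); rewrite !inE xa.
    move/negP: nJC; apply; apply/and3P; split.
    + exact: Ih IX.
    + apply/subsetP=> x xC; have := subsetP sC x xC; rewrite !inE.
      by case/orP=> [/eqP->//|xB]; exact: (subsetP sBU).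
    + have := subset_leq_card sCX; rewrite cX; clear -hc cDelta; lia.
  - have sX : X \subset (Delta :\ a) :|: (C :\ a).
      apply/subsetP=> x xX; have xa : x != a by apply: contraNneq aX => <-.
      have := subsetP s2 x xX; rewrite !inE xa /=.
      by case/orP=> ->; rewrite ?orbT.
    have := hW X sX IX; clear -cX hD; lia.
move/and4P: Hb => [bC ba bD Ib].
exists b; last by split=> //; exact: stepA.
rewrite inE bD /=; apply: (subsetP sCaB); by rewrite !inE ba.
Qed.
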